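(* Let $p,p'$ be processes (of possibly different LTSs) such that $p$ subsumes $p'$. If $\varphi\in\mathrm{sHML}$ is closed and $p\in[\![\varphi]\!]_B$, then $p'\in[\![\varphi]\!]_B$. Dually, if $\varphi\in\mathrm{cHML}$ is closed and $p\notin[\![\varphi]\!]_B$, then $p'\notin[\![\varphi]\!]_B$.
   Context: Fix a finite set $\mathrm{Act}$ of actions, $\tau\notin\mathrm{Act}$. $\mathrm{sHML}$: $\varphi::=\mathrm{tt}\mid\mathrm{ff}\mid[A]\varphi\mid\varphi\wedge\varphi\mid\max X.\varphi\mid X$; $\mathrm{cHML}$: $\varphi::=\mathrm{tt}\mid\mathrm{ff}\mid\langle A\rangle\varphi\mid\varphi\vee\varphi\mid\min X.\varphi\mid X$ ($A\subseteq\mathrm{Act}$, guarded). Branching-time semantics over an LTS $(\mathrm{Proc},\mathrm{Act}\cup\{\tau\},\to)$, with $p\overset{a}{\Longrightarrow}q$ iff $p(\xrightarrow{\tau})^*\xrightarrow{a}(\xrightarrow{\tau})^*q$ and $p\overset{a_1\cdots a_k}{\Longrightarrow}q$ the composition: $[\![\mathrm{tt}]\!]_B=\mathrm{Proc}$, $[\![\mathrm{ff}]\!]_B=\emptyset$, $\vee,\wedge$ union/intersection, $[\![\langle A\rangle\varphi,\rho]\!]_B=\{p\mid\exists a\in A,\exists q.\ p\overset{a}{\Longrightarrow}q\wedge q\in[\![\varphi,\rho]\!]_B\}$, $[\![[A]\varphi,\rho]\!]_B=\{p\mid\forall a\in A,\forall q.\ p\overset{a}{\Longrightarrow}q\Rightarrow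 q\in[\![\varphi,\rho]\!]_B\}$, $\min/\max$ as least/greatest fixpoints, $[\![X,\rho]\!]_B=\rho(X)$. A process $p$ produces a finite trace $s\in\mathrm{Act}^*$ if $p\overset{s}{\Longrightarrow}q$ for some $q$, and produces an infinite trace $a_1a_2\cdots$ if there are $p=p_0,p_1,p_2,\ldots$ with $p_{i-1}\overset{a_i}{\Longrightarrow}p_i$ for all $i\ge1$. $p$ subsumes $p'$ if $p$ produces every finite or infinite trace that $p'$ produces. *)

(* Defs.v *)
From mathcomp Require Import all_boot.
From Stdlib Require Import Relations.

Set Implicit Arguments.
Unset Strict Implicit.
Unset Printing Implicit Defensive.

Definition var := nat.

(* The label [None] plays the role of the silent action tau. *)
Record LTS (Act : finType) := {
  Proc :> Type;
  trans : Proc -> option Act -> Proc -> Prop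
}.

Section Weak.
Variables (Act : finType) (L : LTS Act).

Definition tau_step (p q : L) : Prop := trans p None q.
Definition tau_star : relation L := clos_refl_trans L tau_step.

Definition weak (p : L) (a : Act) (q : L) : Prop :=
  exists p1 p2, tau_star p p1 /\ trans p1 (Some a) p2 /\ tau_star p2 q.

Fixpoint weak_seq (p : L) (s : seq Act) (q : L) : Prop :=
  match s with
  | [::] => p = q
  | a :: s' => exists r, weak p a r /\ weak_seq r s' q
  end.

Definition produces_fin (p : L) (s : seq Act) : Prop := exists q, weak_seq p s q.

(* infinite trace a_1 a_2 ... represented by t : nat -> Act with t i = a_(i+1) *)
Definition produces_inf (p : L) (t : nat -> Act) : Prop :=
  exists ps : nat -> L, ps 0 = p /\ forall i, weak (ps i) (t i) (ps i.+1).
End Weak.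

Definition subsumes (Act : finType) (L L' : LTS Act) (p : L) (p' : L') : Prop :=
  (forall s, produces_fin p' s -> produces_fin p s) /\
  (forall t, produces_inf p' t -> produces_inf p t).

Definition gfp (P : Type) (F : (P -> Prop) -> (P -> Prop)) : P -> Prop :=
  fun p => exists S : P -> Prop, (forall q, S q -> F S q) /\ S p.
Definition lfp (P : Type) (F : (P -> Prop) -> (P -> Prop)) : P -> Prop :=
  fun p => forall S : P -> Prop, (forall q, F S q -> S q) -> S p.

Definition env_update (P : Type) (rho : var -> P -> Prop) (X : var) (S : P -> Prop)
  : var -> P -> Prop := fun Y => if Y == X then S else rho Y.

Inductive sHML (Act : finType) : Type :=
| s_tt | s_ff
| s_box (A : {set Act}) (phi : sHML Act)
| s_and (phi psi : sHML Act)
| s_max (X : var) (phi : sHML Act)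
| s_var (X : var).

Inductive cHML (Act : finType) : Type :=
| c_tt | c_ff
| c_dia (A : {set Act}) (phi : cHML Act)
| c_or (phi psi : cHML Act)
| c_min (X : var) (phi : cHML Act)
| c_var (X : var).

Arguments s_tt {Act}. Arguments s_ff {Act}. Arguments s_var {Act}.
Arguments c_tt {Act}. Arguments c_ff {Act}. Arguments c_var {Act}.

Fixpoint s_free (Act : finType) (X : var) (phi : sHML Act) : Prop :=
  match phi with
  | s_tt | s_ff => False
  | s_box _ f => s_free X f
  | s_and f g => s_free X f \/ s_free X g
  | s_max Y f => Y <> X /\ s_free X f
  | s_var Y => Y = X
  end.
Fixpoint c_free (Act : finType) (X : var) (phi : cHML Act) : Prop :=
  match phi with
  | c_tt | c_ff => False
  | c_dia _ f => c_free X f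
  | c_or f g => c_free X f \/ c_free X g
  | c_min Y f => Y <> X /\ c_free X f
  | c_var Y => Y = X
  end.
Definition s_closed (Act : finType) (phi : sHML Act) := forall X, ~ s_free X phi.
Definition c_closed (Act : finType) (phi : cHML Act) := forall X, ~ c_free X phi.

Fixpoint s_unguarded (Act : finType) (X : var) (phi : sHML Act) : Prop :=
  match phi with
  | s_tt | s_ff | s_box _ _ => False
  | s_and f g => s_unguarded X f \/ s_unguarded X g
  | s_max Y f => Y <> X /\ s_unguarded X f
  | s_var Y => Y = X
  end.
Fixpoint c_unguarded (Act : finType) (X : var) (phi : cHML Act) : Prop :=
  match phi with
  | c_tt | c_ff | c_dia _ _ => False
  | c_or f g => c_unguarded X f \/ c_unguarded X g
  | c_min Y f => Y <> X /\ c_unguarded X f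
  | c_var Y => Y = X
  end.
Fixpoint s_guarded (Act : finType) (phi : sHML Act) : Prop :=
  match phi with
  | s_tt | s_ff | s_var _ => True
  | s_box _ f => s_guarded f
  | s_and f g => s_guarded f /\ s_guarded g
  | s_max X f => ~ s_unguarded X f /\ s_guarded f
  end.
Fixpoint c_guarded (Act : finType) (phi : cHML Act) : Prop :=
  match phi with
  | c_tt | c_ff | c_var _ => True
  | c_dia _ f => c_guarded f
  | c_or f g => c_guarded f /\ c_guarded g
  | c_min X f => ~ c_unguarded X f /\ c_guarded f
  end.

Fixpoint sem_s (Act : finType) (L : LTS Act) (phi : sHML Act)
  (rho : var -> L -> Prop) : L -> Prop :=
  match phi with
  | s_tt => fun _ => True
  | s_ff => fun _ => False
  | s_box A f => fun p => forall a, a \in A -> forall q, weak p a q -> sem_s f rho q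
  | s_and f g => fun p => sem_s f rho p /\ sem_s g rho p
  | s_max X f => gfp (fun S => sem_s f (env_update rho X S))
  | s_var X => rho X
  end.
Fixpoint sem_c (Act : finType) (L : LTS Act) (phi : cHML Act)
  (rho : var -> L -> Prop) : L -> Prop :=
  match phi with
  | c_tt => fun _ => True
  | c_ff => fun _ => False
  | c_dia A f => fun p => exists a, a \in A /\ exists q, weak p a q /\ sem_c f rho q
  | c_or f g => fun p => sem_c f rho p \/ sem_c g rho p
  | c_min X f => lfp (fun S => sem_c f (env_update rho X S))
  | c_var X => rho X
  end.

(* the empty environment (semantics of closed formulas is independent of it) *)
Definition env0 (Act : finType) (L : LTS Act) : var -> L -> Prop := fun _ _ => False.

(* Main.v *)
Require Import Defs.
From mathcomp Require Import all_boot.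

Section Aux.
Variables (Act : finType).

Lemma weak_seq_rcons (L : LTS Act) (s : seq Act) : forall (p r : L) a,
  weak_seq p (rcons s a) r <-> exists q, weak_seq p s q /\ weak q a r.
Proof.
elim: s => [|b s IH] p r a /=.
- split.
  + move=> [r' [H1 H2]]; subst; exists p; split => //.
  + move=> [q [<- H]]; exists r; split => //.
- split.
  + move=> [r1 [H1 H2]]; have [q [Hq Ha]] := (proj1 (IH r1 r a) H2).
    exists q; split => //; exists r1; split => //.
  + move=> [q [[r1 [H1 H2]] Ha]]; exists r1; split => //.
    apply/IH; exists q; split => //.
Qed.

Lemma sem_s_mono (L : LTS Act) (phi : sHML Act) : forall (r1 r2 : var -> L -> Prop),
  (forall X q, r1 X q -> r2 X q) -> forall q, sem_s phi r1 q -> sem_s phi r2 q.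
Proof.
elim: phi => [| |A f IH|f IHf g IHg|X f IH|X] r1 r2 H q /=.
- done.
- done.
- move=> Hq a Ha q' Hw; exact: (IH r1 r2 H _ (Hq a Ha q' Hw)).
- move=> [H1 H2]; split; [exact: (IHf r1 r2 H) | exact: (IHg r1 r2 H)].
- move=> [S [HS Sq]]; exists S; split => // q' Sq'.
  apply: (IH (env_update r1 X S)); last exact: HS.
  move=> Y z; rewrite /env_update; case: (Y == X) => //; exact: H.
- exact: H.
Qed.

Lemma sem_c_mono (L : LTS Act) (phi : cHML Act) : forall (r1 r2 : var -> L -> Prop),
  (forall X q, r1 X q -> r2 X q) -> forall q, sem_c phi r1 q -> sem_c phi r2 q.
Proof.
elim: phi => [| |A f IH|f IHf g IHg|X f IH|X] r1 r2 H q /=.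
- done.
- done.
- move=> [a [Ha [q' [Hw Hs]]]]; exists a; split => //; exists q'; split => //.
  exact: (IH r1 r2 H).
- move=> [H1|H2]; [left; exact: (IHf r1 r2 H) | right; exact: (IHg r1 r2 H)].
- move=> Hl S HS; apply: Hl => q' Hq'; apply: HS.
  apply: (IH (env_update r1 X S)); last exact: Hq'.
  move=> Y z; rewrite /env_update; case: (Y == X) => //; exact: H.
- exact: H.
Qed.

Variables (L L' : LTS Act) (p : L) (p' : L').
Hypothesis Hfin : forall s, produces_fin p' s -> produces_fin p s.

Lemma s_main (phi : sHML Act) : forall (rho : var -> L -> Prop) (rho' : var -> L' -> Prop),
  (forall X s q', (forall q, weak_seq p s q -> rho X q) -> weak_seq p' s q' -> rho' X q') ->
  forall s q', (forall q, weak_seq p s q -> sem_s phi rho q) -> weak_seq p' s q' ->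
     sem_s phi rho' q'.
Proof.
elim: phi => [| |A f IH|f IHf g IHg|X f IH|X] rho rho' Henv s q' Hq Hs' /=.
- done.
- have [q Hq0] := Hfin s (ex_intro _ q' Hs'); exact: (Hq q Hq0).
- move=> a Ha r' Hw.
  apply: (IH rho rho' Henv (rcons s a)).
  + move=> r /weak_seq_rcons [q [H1 H2]]; exact: (Hq q H1 a Ha r H2).
  + apply/weak_seq_rcons; exists q'; split => //.
- split.
  + apply: (IHf rho rho' Henv s q' _ Hs') => q Hq0; exact: (proj1 (Hq q Hq0)).
  + apply: (IHg rho rho' Henv s q' _ Hs') => q Hq0; exact: (proj2 (Hq q Hq0)).
- set G := gfp (fun S => sem_s f (env_update rho X S)).
  exists (fun z => exists s, weak_seq p' s z /\ forall q, weak_seq p s q -> G q).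
  split; last by exists s; split.
  move=> z [t [Ht HG]].
  apply: (IH (env_update rho X G)) ; last exact: Ht.
  + move=> Y u v; rewrite /env_update; case: (Y == X) => H1 H2.
    * by exists u; split.
    * exact: (Henv Y u v H1 H2).
  + move=> q /HG [S [HS Sq]].
    apply: (@sem_s_mono L f (env_update rho X S)); last exact: HS.
    move=> Y z0; rewrite /env_update; case: (Y == X) => // Sz; by exists S.
- exact: (Henv X s).
Qed.

Lemma c_main (phi : cHML Act) : forall (rho : var -> L -> Prop) (rho' : var -> L' -> Prop),
  (forall X s q', rho' X q' -> weak_seq p' s q' -> exists q, weak_seq p s q /\ rho X q) ->
  forall s q', sem_c phi rho' q' -> weak_seq p' s q' ->
     exists q, weak_seq p s q /\ sem_c phi rho q.
Proof.
elim: phi => [| |A f IH|f IHf g IHg|X f IH|X] rho rho' Henv s q' Hq Hs' /=.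
- have [q Hq0] := Hfin s (ex_intro _ q' Hs'); by exists q.
- done.
- move: Hq => [a [Ha [r' [Hw Hr]]]].
  have Hs2 : weak_seq p' (rcons s a) r' by apply/weak_seq_rcons; exists q'.
  have [r [/weak_seq_rcons [q [H1 H2]] Hr2]] := IH rho rho' Henv _ _ Hr Hs2.
  exists q; split => //; exists a; split => //; exists r; split => //.
- case: Hq => Hq.
  + have [q [H1 H2]] := IHf rho rho' Henv s q' Hq Hs'; exists q; split => //; by left.
  + have [q [H1 H2]] := IHg rho rho' Henv s q' Hq Hs'; exists q; split => //; by right.
- set G := lfp (fun S => sem_c f (env_update rho X S)).
  pose S' := fun z => forall t, weak_seq p' t z -> exists q, weak_seq p t q /\ G q.
  have HS' : S' q'.
    apply: Hq => z Hz t Ht.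
    have Henv2 : forall Y u v, env_update rho' X S' Y v -> weak_seq p' u v ->
        exists q, weak_seq p u q /\ env_update rho X G Y q.
      move=> Y u v; rewrite /env_update; case: (Y == X).
      * move=> H1 H2; exact: H1.
      * exact: Henv.
    have [q [H1 H2]] := IH _ _ Henv2 t z Hz Ht.
    exists q; split => // S HS; apply: (HS).
    apply: (@sem_c_mono L f (env_update rho X G)); last exact: H2.
    move=> Y z0; rewrite /env_update; case: (Y == X) => // Gz; exact: Gz S HS.
  exact: HS' s Hs'.
- exact: (Henv X s q').
Qed.
End Aux.

Theorem mainTheorem16 (Act : finType) (L L' : LTS Act) (p : L) (p' : L') :
  subsumes p p' ->
  (forall phi : sHML Act, s_closed phi -> s_guarded phi ->
     sem_s phi (@env0 _ L) p -> sem_s phi (@env0 _ L') p') /\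
  (forall phi : cHML Act, c_closed phi -> c_guarded phi ->
     ~ sem_c phi (@env0 _ L) p -> ~ sem_c phi (@env0 _ L') p').
Proof.
move=> [Hfin _]; split.
- move=> phi _ _ H.
  apply: (@s_main Act L L' p p' Hfin phi (@env0 _ L) (@env0 _ L') _ [::] p' _ erefl).
  + move=> X s q' H1 H2; have [q Hq] := Hfin s (ex_intro _ q' H2); exact: (H1 q Hq).
  + by move=> q /= <-.
- move=> phi _ _ H H'; apply: H.
  have [q [/= <- Hq]] := @c_main Act L L' p p' Hfin phi (@env0 _ L) (@env0 _ L')
     (fun _ _ _ f _ => match f with end) [::] p' H' erefl.
  exact: Hq.
Qed.
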